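(* Let $\mathcal{U}$ be a free ultrafilter on $\mathbb{N}$. If $\{2^{(2^k)} : k \in \mathbb{N},\ k \text{ odd}\} \in \mathcal{U}$, then $$\alpha - \sqrt{\alpha} \;<\; \mathrm{num}_{\mathcal{U}}(\mathbb{S}) \;<\; \alpha - \sqrt{\alpha} + \alpha^{1/4}.$$ If $\{2^{(2^k)} : k \in \mathbb{N},\ k \text{ even}\} \in \mathcal{U}$, then $$\sqrt{\alpha} - \alpha^{1/4} \;<\; \mathrm{num}_{\mathcal{U}}(\mathbb{S}) \;<\; \sqrt{\alpha}.$$
   Context: $\mathbb{N} = \{1,2,3,\ldots\}$; for $S \subseteq \mathbb{N}$, $f_n(S) = |S \cap \{1,\ldots,n\}|$. The set $\mathbb{S}$ is defined by: $n \in \mathbb{S}$ iff $n \geq 2$ and $\lceil \log_2(\log_2 n)\rceil$ is odd. Given a free ultrafilter $\mathcal{U}$ on $\mathbb{N}$, let ${}^*\mathbb{R} = \mathbb{R}^{\mathbb{N}}/\mathcal{U}$ be the ultrapower: elements are classes $[(x_n)]$ of real sequences with $[(x_n)] = [(y_n)]$ iff $\{n : x_n = y_n\} \in \mathcal{U}$, operations componentwise, and $[(x_n)] < [(y_n)]$ iff $\{n : x_n < y_n\} \in \mathcal{U}$. Set $\alpha = [(n)_n]$, $\sqrt{\alpha} = [(n^{1/2})_n]$, $\alpha^{1/4} = [(n^{1/4})_n]$, and $\mathrm{num}_{\mathcal{U}}(S) = [(f_n(S))_n]$ (the $\alpha$-numerosity of $S$). *)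

(* Defs.v *)
From HB Require Import structures.
From mathcomp Require Import all_boot all_order all_algebra.
From mathcomp Require Import all_classical all_reals all_analysis.
From mathcomp Require Import Rstruct Rstruct_topology.
Set Implicit Arguments. Unset Strict Implicit. Unset Printing Implicit Defensive.
Import Order.TTheory GRing.Theory Num.Theory.
Local Open Scope classical_set_scope.
Local Open Scope ring_scope.

Notation R := Rdefinitions.R.

Definition log2 (x : R) : R := ln x / ln 2.

Definition inSS (n : nat) : bool :=
  (2 <= n)%N && odd `|Num.ceil (log2 (log2 n%:R))|%N.

Definition fcount (P : pred nat) (n : nat) : nat := count P (iota 1 n).

Definition free_ultrafilter (U : set (set nat)) : Prop :=
  U setT /\ ~ U set0 /\
  (forall A B, A `<=` B -> U A -> U B) /\
  (forall A B, U A -> U B -> U (A `&` B)) /\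
  (forall A, U A \/ U (~` A)) /\
  (forall A, finite_set A -> ~ U A).

(* strict order of the ultrapower R^N/U on representatives:
   [(x_n)] < [(y_n)] iff {n | x_n < y_n} \in U *)
Definition ult (U : set (set nat)) (x y : nat -> R) : Prop :=
  U [set n | x n < y n].

Definition alpha_seq : nat -> R := fun n => n%:R.
Definition sqrt_alpha_seq : nat -> R := fun n => Num.sqrt (n%:R).
Definition qrt_alpha_seq : nat -> R := fun n => (n%:R) `^ (4%:R)^-1.
Definition num_seq (P : pred nat) : nat -> R := fun n => (fcount P n)%:R.

(* Main.v *)
Require Import Defs.
From HB Require Import structures.
From mathcomp Require Import all_boot all_order all_algebra.
From mathcomp Require Import all_classical all_reals all_analysis.
From mathcomp Require Import Rstruct Rstruct_topology.
From mathcomp Require Import zify ring lra.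
Import Order.TTheory GRing.Theory Num.Theory.
Local Open Scope classical_set_scope.
Local Open Scope ring_scope.

Lemma ln2_gt0 : 0 < ln (2 : R).
Proof. by apply: ln_gt0; rewrite ltr1n. Qed.

Lemma log2_le (x y : R) : 0 < x -> 0 < y -> (log2 x <= log2 y) = (x <= y).
Proof.
move=> hx hy; rewrite /log2 ler_pM2r ?invr_gt0 ?ln2_gt0 //.
by rewrite ler_ln ?posrE.
Qed.

Lemma log2_lt (x y : R) : 0 < x -> 0 < y -> (log2 x < log2 y) = (x < y).
Proof.
move=> hx hy; rewrite /log2 ltr_pM2r ?invr_gt0 ?ln2_gt0 //.
by rewrite ltr_ln ?posrE.
Qed.

Lemma log2X (p : nat) : log2 (2 ^+ p) = p%:R.
Proof.
rewrite /log2 lnXn // -[_ *+ p]mulr_natr mulrAC divff ?mul1r //.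
by rewrite gt_eqF // ln2_gt0.
Qed.

Definition NN (j : nat) : nat := (2 ^ (2 ^ j))%N.

Lemma NN_ge2 j : (2 <= NN j)%N.
Proof.
rewrite /NN; have h : (1 <= 2 ^ j)%N by rewrite expn_gt0.
by rewrite -{1}(expn1 2) leq_exp2l.
Qed.

Lemma log2_le_iff (m : nat) (j : nat) : (0 < m)%N ->
  (log2 m%:R <= (2 ^ j)%:R) = (m <= NN j)%N.
Proof.
move=> hm; rewrite -[(2 ^ j)%:R]log2X log2_le ?ltr0n ?exprn_gt0 //.
by rewrite /NN -natrX ler_nat.
Qed.

Lemma log2_lt_iff (m : nat) (j : nat) : (0 < m)%N ->
  ((2 ^ j)%:R < log2 m%:R) = (NN j < m)%N.
Proof.
move=> hm; rewrite -[(2 ^ j)%:R]log2X log2_lt ?ltr0n ?exprn_gt0 //.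
by rewrite /NN -natrX ltr_nat.
Qed.

Lemma ceil_SS (m k : nat) : (NN k < m)%N -> (m <= NN k.+1)%N ->
  Num.ceil (log2 (log2 m%:R)) = (k.+1)%:Z.
Proof.
move=> h1 h2.
have hm : (0 < m)%N by apply: leq_ltn_trans h1.
have hl : (2 ^ k)%:R < log2 m%:R by rewrite log2_lt_iff.
have hp : 0 < log2 m%:R by apply: le_lt_trans hl.
apply: ceil_def; apply/andP; split.
  rewrite -addn1 PoszD addrK /=.
  rewrite -[X in X < _]/(k%:R) -[k%:R]log2X.
  by rewrite log2_lt // ?exprn_gt0 // -natrX.
rewrite -[X in _ <= X]/(k.+1%:R) -[k.+1%:R]log2X.
by rewrite log2_le // ?exprn_gt0 // -natrX log2_le_iff.
Qed.

Lemma inSS_int (m k : nat) : (NN k < m)%N -> (m <= NN k.+1)%N ->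
  inSS m = odd k.+1.
Proof.
move=> h1 h2; rewrite /inSS (@ceil_SS m k h1 h2) /=.
by rewrite (leq_trans (NN_ge2 k) (ltnW h1)).
Qed.

Definition gg (j : nat) : nat := fcount inSS (NN j).

Lemma NN_lt k : (NN k < NN k.+1)%N.
Proof. by rewrite /NN ltn_exp2l // ltn_exp2l. Qed.

Lemma NN_sq k : NN k.+1 = (NN k ^ 2)%N.
Proof. by rewrite /NN expnS mulnC expnM. Qed.

Lemma gg_rec k : gg k.+1 = (gg k + odd k.+1 * (NN k.+1 - NN k))%N.
Proof.
rewrite /gg /fcount -(subnKC (ltnW (NN_lt k))) iotaD count_cat.
congr (_ + _)%N.
have -> : count inSS (iota (1 + NN k) (NN k.+1 - NN k)) =
          count (fun _ => odd k.+1) (iota (1 + NN k) (NN k.+1 - NN k)).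
  apply: eq_in_count => x; rewrite mem_iota => /andP [h1 h2].
  apply: (@inSS_int x k); first by rewrite -add1n.
  by have := NN_lt k; lia.
case: (odd k.+1).
  by rewrite count_predT size_iota mul1n addKn.
by rewrite count_pred0.
Qed.

Lemma gg_lt j : (gg j < NN j)%N.
Proof.
rewrite /gg /fcount.
have h := NN_ge2 j.
rewrite -(prednK (ltnW h)) /= /inSS /=.
apply: leq_ltn_trans (count_size _ _) _.
by rewrite size_iota.
Qed.

Lemma gg_pos j : (0 < gg j.+1)%N.
Proof.
elim: j => [|j IH]; first by rewrite gg_rec; have := NN_lt 0; simpl odd; lia.
by rewrite gg_rec; apply: leq_trans IH (leq_addr _ _).
Qed.

Lemma gg_odd j : odd j -> gg j.+2 = (gg j + (NN j.+2 - NN j.+1))%N.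
Proof.
move=> hj; rewrite gg_rec gg_rec /= hj /=.
by rewrite mul0n addn0 mul1n.
Qed.

Lemma gg_even j : odd j -> gg j.+3 = (gg j + (NN j.+2 - NN j.+1))%N.
Proof. by move=> hj; rewrite gg_rec /= hj /= mul0n addn0 gg_odd. Qed.

Lemma sqrtNN k : Num.sqrt (NN k.+1)%:R = (NN k)%:R :> R.
Proof. by rewrite NN_sq natrX sqrtr_sqr ger0_norm. Qed.

Lemma qrtNN k : (NN k.+2)%:R `^ (4%:R)^-1 = (NN k)%:R :> R.
Proof.
have -> : NN k.+2 = (NN k ^ 4)%N by rewrite NN_sq NN_sq -expnM.
rewrite natrX -powR_mulrn // -powRrM mulfV // powRr1 //.
Qed.

Lemma ultra_sub U A B x : free_ultrafilter U -> U A ->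
  (forall n, A n -> n <> x -> B n) -> U B.
Proof.
move=> [_ [_ [Hmono [Hcap [Hult Hfin]]]]] HA HAB.
have Hc : U (~` [set x]).
  by case: (Hult [set x]) => // h; exfalso; exact: (Hfin _ (finite_set1 x)).
apply: (Hmono (A `&` ~` [set x])); last exact: Hcap.
by move=> n [h1 h2]; apply: HAB.
Qed.

Lemma odd_bounds j : odd j ->
  ((NN j.+2)%:R - Num.sqrt (NN j.+2)%:R < (gg j.+2)%:R :> R) /\
  ((gg j.+2)%:R < (NN j.+2)%:R - Num.sqrt (NN j.+2)%:R
                  + (NN j.+2)%:R `^ (4%:R)^-1 :> R).
Proof.
move=> hj; rewrite sqrtNN qrtNN gg_odd //.
have := gg_lt j; have := NN_lt j; have := NN_lt j.+1.
have := gg_pos j.-1; rewrite prednK ?(odd_gt0 hj) // => h1 h2 h3 h4.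
split.
  have : (NN j.+2 < gg j + (NN j.+2 - NN j.+1) + NN j.+1)%N by lia.
  rewrite -(ltr_nat R) !natrD => h; lra.
have : (gg j + (NN j.+2 - NN j.+1) + NN j.+1 < NN j.+2 + NN j)%N by lia.
rewrite -(ltr_nat R) !natrD => h; lra.
Qed.

Lemma even_bounds j : odd j ->
  (Num.sqrt (NN j.+3)%:R - (NN j.+3)%:R `^ (4%:R)^-1 < (gg j.+3)%:R :> R) /\
  ((gg j.+3)%:R < Num.sqrt (NN j.+3)%:R :> R).
Proof.
move=> hj; rewrite sqrtNN qrtNN gg_even //.
have := gg_lt j; have := NN_lt j; have := NN_lt j.+1.
have := gg_pos j.-1; rewrite prednK ?(odd_gt0 hj) // => h1 h2 h3 h4.
split.
  have : (NN j.+2 < gg j + (NN j.+2 - NN j.+1) + NN j.+1)%N by lia.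
  rewrite -(ltr_nat R) !natrD => h; lra.
have : (gg j + (NN j.+2 - NN j.+1) < NN j.+2)%N by lia.
by rewrite -(ltr_nat R) natrD.
Qed.

Theorem mainTheorem5 (U : set (set nat)) (HU : free_ultrafilter U) :
  (U [set (2 ^ (2 ^ k))%N | k in [set k : nat | (0 < k)%N /\ odd k]] ->
     ult U (fun n => alpha_seq n - sqrt_alpha_seq n) (num_seq inSS) /\
     ult U (num_seq inSS)
           (fun n => alpha_seq n - sqrt_alpha_seq n + qrt_alpha_seq n))
  /\
  (U [set (2 ^ (2 ^ k))%N | k in [set k : nat | (0 < k)%N /\ ~~ odd k]] ->
     ult U (fun n => sqrt_alpha_seq n - qrt_alpha_seq n) (num_seq inSS) /\
     ult U (num_seq inSS) sqrt_alpha_seq).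
Proof.
split=> HA.
  split; apply: (@ultra_sub U _ _ 4%N HU HA) => _ [k [k0 ko] <-] hn;
  case: k k0 ko hn => [|[|j]] //= _ hj hn;
  rewrite ?negbK in hj;
  have [H1 H2] := @odd_bounds j hj; exact.
split; apply: (@ultra_sub U _ _ 16%N HU HA) => _ [k [k0 ko] <-] hn;
  case: k k0 ko hn => [|[|[|j]]] //= _ hj hn;
  rewrite ?negbK in hj;
  have [H1 H2] := @even_bounds j hj; exact.
Qed.
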